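(* Let $\mathcal P$ be a 2-reflex orthostack made of four bricks with canonical contact rectangles, all three of which have type $1$ (i.e., its signature is $s_1s_2s_3$ with each $s_t\in\{\sqcup_1,\sqcap_1\}$). Then $\mathcal P$ is guarded by a single vertical closed face guard.
   Context: A 2-reflex orthostack is an orthogonal polyhedron with no reflex edge parallel to the vertical ($z$) axis all of whose horizontal cross-sections are simply connected; it is a stack of bricks $B_t=R_t\times[z_{t-1},z_t]$, $t=1,\dots,k$ (bottom to top), $z_0<\dots<z_k$, each $R_t$ an axis-parallel rectangle, $R_t\ne R_{t+1}$. The contact rectangle between $B_t$ and $B_{t+1}$ is $(R_t\cap R_{t+1})\times\{z_t\}$; it is canonical if one of $R_t,R_{t+1}$ is strictly contained in the other and their set difference is connected. The type of a canonical contact rectangle is the number $i\in\{1,2,3,4\}$ of sides of the smaller rectangle not contained in the boundary of the larger one. The contact is denoted $\sqcup_i$ if $R_t\subsetneq R_{t+1}$ and $\sqcap_i$ if $R_{t+1}\subsetneq R_t$. The signature is the sequence of these symbols for $t=1,\dots,k-1$, read bottom to top. A point $x$ is visible to $y$ if segment $xy$ does not meet the exterior of the polyhedron; a closed face guard is a face including its boundary; it guards the polyhedron if every point is visible from some point of it. A face is vertical if parallel to the $z$-axis. *)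

(* Defs.v *)
From Stdlib Require Import Reals.
Open Scope R_scope.

Record pt : Type := Pt { px : R; py : R; pz : R }.

Record rect : Type := Rect { rx1 : R; rx2 : R; ry1 : R; ry2 : R }.

Definition rect_ok (r : rect) : Prop := rx1 r < rx2 r /\ ry1 r < ry2 r.

Definition rect_sub (r r' : rect) : Prop :=
  rx1 r' <= rx1 r /\ rx2 r <= rx2 r' /\ ry1 r' <= ry1 r /\ ry2 r <= ry2 r'.

(** Canonical contact of type 1 where [r] is the smaller rectangle and [r']
    the larger one: r is strictly contained in r' and exactly one of the four
    sides of r is not contained in the boundary of r'.  For r contained in r',
    the left side {rx1 r} x [ry1 r, ry2 r] lies in the boundary of r' iff
    rx1 r = rx1 r' (similarly for the other sides).  The remaining condition of
    canonicity (r' \ r connected) is automatic when three sides are shared. *)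
Definition canon_type1 (r r' : rect) : Prop :=
  rect_sub r r' /\
  ( (rx1 r' < rx1 r /\ rx2 r = rx2 r' /\ ry1 r = ry1 r' /\ ry2 r = ry2 r')
  \/ (rx1 r = rx1 r' /\ rx2 r < rx2 r' /\ ry1 r = ry1 r' /\ ry2 r = ry2 r')
  \/ (rx1 r = rx1 r' /\ rx2 r = rx2 r' /\ ry1 r' < ry1 r /\ ry2 r = ry2 r')
  \/ (rx1 r = rx1 r' /\ rx2 r = rx2 r' /\ ry1 r = ry1 r' /\ ry2 r < ry2 r') ).

(** Contact between R_t (below) and R_{t+1} (above) is canonical of type 1:
    either a "cup_1" (R_t strictly inside R_{t+1}) or a "cap_1"
    (R_{t+1} strictly inside R_t). *)
Definition contact_type1 (lower upper : rect) : Prop :=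
  canon_type1 lower upper \/ canon_type1 upper lower.

(** The orthostack made of bricks B_t = R_t x [z_{t-1}, z_t], t = 1..k,
    as a (closed) subset of R^3. *)
Definition stack (k : nat) (Rs : nat -> rect) (z : nat -> R) (p : pt) : Prop :=
  exists t : nat, (1 <= t <= k)%nat /\
    rx1 (Rs t) <= px p <= rx2 (Rs t) /\
    ry1 (Rs t) <= py p <= ry2 (Rs t) /\
    z (t - 1)%nat <= pz p <= z t.

Definition stack_ok (k : nat) (Rs : nat -> rect) (z : nat -> R) : Prop :=
  (forall t, (1 <= t <= k)%nat -> rect_ok (Rs t)) /\
  (forall t, (t < k)%nat -> z t < z (S t)).

Definition dist_inf (p q : pt) : R :=
  Rmax (Rabs (px p - px q)) (Rmax (Rabs (py p - py q)) (Rabs (pz p - pz q))).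

Definition visible (P : pt -> Prop) (x y : pt) : Prop :=
  forall l : R, 0 <= l <= 1 ->
    P (Pt (px x + l * (px y - px x)) (py x + l * (py y - py x))
          (pz x + l * (pz y - pz x))).

Definition guards (P F : pt -> Prop) : Prop :=
  forall p, P p -> exists f, F f /\ visible P f p.

Inductive vaxis : Type := AxX | AxY.

Definition vcoord (a : vaxis) (p : pt) : R :=
  match a with AxX => px p | AxY => py p end.

(** Relative-interior points of vertical faces lying in the plane
    {vcoord a = c} with P locally on the side [vcoord a <= c] (if [s] is true)
    or [vcoord a >= c] (if [s] is false): near q, P coincides with the closed
    half-space. *)
Definition face_interior (P : pt -> Prop) (a : vaxis) (c : R) (s : bool)
  (q : pt) : Prop :=
  vcoord a q = c /\
  exists eps : R, 0 < eps /\
    forall r : pt, dist_inf r q < eps ->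
      (P r <-> (if s then vcoord a r <= c else c <= vcoord a r)).

Definition path_in (S : pt -> Prop) (p q : pt) : Prop :=
  exists f : R -> pt,
    continuity (fun t => px (f t)) /\ continuity (fun t => py (f t)) /\
    continuity (fun t => pz (f t)) /\
    f 0 = p /\ f 1 = q /\ forall t, 0 <= t <= 1 -> S (f t).

Definition closure (S : pt -> Prop) (x : pt) : Prop :=
  forall eps : R, 0 < eps -> exists y, S y /\ dist_inf x y < eps.

(** F is a closed vertical face of P: the closure of a connected component of
    the relative interior of a face lying in a vertical plane. *)
Definition vertical_face (P F : pt -> Prop) : Prop :=
  exists (a : vaxis) (c : R) (s : bool) (p0 : pt),
    face_interior P a c s p0 /\
    forall x, F x <-> closure (fun q => face_interior P a c s q /\
                                         path_in (face_interior P a c s) p0 q) x.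

(* Main.v *)
Require Import Defs.
From Stdlib Require Import Reals Lra Lia Classical.
Open Scope R_scope.

Definition cl (u : R) : R := (Rabs u - Rabs (u - 1) + 1) / 2.

Lemma cl_cont : continuity cl.
Proof.
  unfold cl.
  assert (H1 : continuity (fun u => Rabs (u - 1))).
  { change (continuity (comp Rabs (fun u => u - 1))).
    apply continuity_comp; [reg | apply Rcontinuity_abs]. }
  assert (H2 := Rcontinuity_abs).
  intro x. unfold continuity in *.
  apply continuity_pt_mult; [| apply continuity_pt_const; intros ?; auto].
  apply continuity_pt_plus; [| apply continuity_pt_const; intros ?; auto].
  apply continuity_pt_minus; auto.
Qed.

Lemma cl_low u : u <= 0 -> cl u = 0.
Proof. intros; unfold cl, Rabs; destruct Rcase_abs; destruct Rcase_abs; lra. Qed.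
Lemma cl_mid u : 0 <= u <= 1 -> cl u = u.
Proof. intros; unfold cl, Rabs; destruct Rcase_abs; destruct Rcase_abs; lra. Qed.
Lemma cl_high u : 1 <= u -> cl u = 1.
Proof. intros; unfold cl, Rabs; destruct Rcase_abs; destruct Rcase_abs; lra. Qed.

Lemma comp_cont (f : R -> pt) (g : pt -> R) (h : R -> R) :
  continuity (fun t => g (f t)) -> continuity h -> continuity (fun t => g (f (h t))).
Proof. intros Hf Hh. change (continuity (comp (fun t => g (f t)) h)).
  apply continuity_comp; auto. Qed.

Lemma lin_cont (a b : R) (h : R -> R) : continuity h -> continuity (fun t => h (a * t + b)).
Proof. intros Hh. change (continuity (comp h (fun t => a * t + b))).
  apply continuity_comp; auto. reg. Qed.

Lemma sum3_cont (f g : R -> R) (c : R) :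
  continuity f -> continuity g -> continuity (fun t => f t + g t - c).
Proof. intros Hf Hg x. apply continuity_pt_minus.
  apply continuity_pt_plus; auto. apply continuity_pt_const; intros ?; auto. Qed.

Lemma path_trans S p q r : path_in S p q -> path_in S q r -> path_in S p r.
Proof.
  intros [f (fx & fy & fz & f0 & f1 & fS)] [g (gx & gy & gz & g0 & g1 & gS)].
  set (h := fun t => Pt (px (f (cl (2 * t + 0))) + px (g (cl (2 * t + -1))) - px q)
                       (py (f (cl (2 * t + 0))) + py (g (cl (2 * t + -1))) - py q)
                       (pz (f (cl (2 * t + 0))) + pz (g (cl (2 * t + -1))) - pz q)).
  exists h. unfold h; simpl.
  assert (Hc : forall (k : R -> pt) (pr : pt -> R) b, continuity (fun t => pr (k t)) ->
     continuity (fun t => pr (k (cl (2 * t + b))))).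
  { intros k pr b Hk. apply (lin_cont 2 b (fun u => pr (k (cl u)))).
    apply comp_cont; auto. apply cl_cont. }
  split; [apply sum3_cont; apply Hc; auto|].
  split; [apply sum3_cont; apply Hc; auto|].
  split; [apply sum3_cont; apply Hc; auto|].
  split.
  { rewrite (cl_mid (2*0+0)) by lra. rewrite (cl_low (2*0 + -1)) by lra.
    replace (2*0+0) with 0 by ring. rewrite f0, g0. destruct p, q; simpl; f_equal; ring. }
  split.
  { rewrite (cl_high (2*1+0)) by lra. rewrite (cl_mid (2*1 + -1)) by lra.
    replace (2*1+ -1) with 1 by ring. rewrite f1, g1. destruct r, q; simpl; f_equal; ring. }
  intros t Ht. destruct (Rle_lt_dec t (1/2)).
  - rewrite (cl_mid (2*t+0)) by lra. rewrite (cl_low (2*t + -1)) by lra.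
    rewrite g0. specialize (fS (2*t+0) ltac:(lra)).
    replace (Pt _ _ _) with (f (2*t+0)); [exact fS|]. destruct (f (2*t+0)), q; simpl; f_equal; ring.
  - rewrite (cl_high (2*t+0)) by lra. rewrite (cl_mid (2*t + -1)) by lra.
    rewrite f1. specialize (gS (2*t+ -1) ltac:(lra)).
    replace (Pt _ _ _) with (g (2*t+ -1)); [exact gS|]. destruct (g (2*t+ -1)), q; simpl; f_equal; ring.
Qed.

Definition segpt (p q : pt) (l : R) : pt :=
  Pt (px p + l * (px q - px p)) (py p + l * (py q - py p)) (pz p + l * (pz q - pz p)).

Lemma seg_path (S : pt -> Prop) p q :
  (forall l, 0 <= l <= 1 -> S (segpt p q l)) -> path_in S p q.
Proof.
  intros H. exists (segpt p q). unfold segpt; simpl.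
  split; [reg|]. split; [reg|]. split; [reg|].
  split; [destruct p; simpl; f_equal; ring|].
  split; [destruct p, q; simpl; f_equal; ring|]. exact H.
Qed.

Lemma path_refl S p : S p -> path_in S p p.
Proof. intros H. apply seg_path. intros l _. unfold segpt.
  replace (Pt _ _ _) with p; [exact H|]. destruct p; simpl; f_equal; ring. Qed.

Lemma conv A B x y l : A <= x <= B -> A <= y <= B -> 0 <= l <= 1 -> A <= x + l * (y - x) <= B.
Proof. intros. split; nra. Qed.

Lemma dist_bounds r q e : dist_inf r q < e ->
  Rabs (px r - px q) < e /\ Rabs (py r - py q) < e /\ Rabs (pz r - pz q) < e.
Proof.
  unfold dist_inf; intros H.
  pose proof (Rmax_l (Rabs (px r - px q)) (Rmax (Rabs (py r - py q)) (Rabs (pz r - pz q)))).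
  pose proof (Rmax_r (Rabs (px r - px q)) (Rmax (Rabs (py r - py q)) (Rabs (pz r - pz q)))).
  pose proof (Rmax_l (Rabs (py r - py q)) (Rabs (pz r - pz q))).
  pose proof (Rmax_r (Rabs (py r - py q)) (Rabs (pz r - pz q))).
  lra.
Qed.

Definition coord (k : nat) (r : rect) : R :=
  match k with 0%nat => rx1 r | 1%nat => rx2 r | 2%nat => ry1 r | _ => ry2 r end.

Lemma contact_one r r' : contact_type1 r r' ->
  exists k, (k < 4)%nat /\ forall j, (j < 4)%nat -> j <> k -> coord j r = coord j r'.
Proof.
  unfold contact_type1, canon_type1.
  intros [[_ H]|[_ H]]; destruct H as [H|[H|[H|H]]];
  [exists 0%nat|exists 1%nat|exists 2%nat|exists 3%nat|exists 0%nat|exists 1%nat|exists 2%nat|exists 3%nat];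
  (split; [lia|]); intros j Hj Hjk; destruct j as [|[|[|[|j]]]]; simpl; (lia || lra).
Qed.

Lemma pick3 k1 k2 k3 : exists j, (j < 4)%nat /\ j <> k1 /\ j <> k2 /\ j <> k3.
Proof.
  apply NNPP; intro H.
  assert (A : forall j, (j < 4)%nat -> j = k1 \/ j = k2 \/ j = k3).
  { intros j Hj. apply NNPP; intro N. apply H. exists j. tauto. }
  pose proof (A 0%nat ltac:(lia)); pose proof (A 1%nat ltac:(lia));
  pose proof (A 2%nat ltac:(lia)); pose proof (A 3%nat ltac:(lia)). lia.
Qed.

Definition idx (a : vaxis) (s : bool) : nat :=
  match a, s with AxX, false => 0%nat | AxX, true => 1%nat
             | AxY, false => 2%nat | AxY, true => 3%nat end.
Definition tlo (a : vaxis) (r : rect) : R := match a with AxX => ry1 r | AxY => rx1 r end.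
Definition thi (a : vaxis) (r : rect) : R := match a with AxX => ry2 r | AxY => rx2 r end.
Definition tc (a : vaxis) (p : pt) : R := match a with AxX => py p | AxY => px p end.
Definition fm (a : vaxis) (s : bool) (c : R) (r : rect) : R :=
  if s then c - coord (idx a (negb s)) r else coord (idx a (negb s)) r - c.
Definition mk (a : vaxis) (c u w : R) : pt := match a with AxX => Pt c u w | AxY => Pt u c w end.

Definition in_brick (Rs : nat -> rect) (z : nat -> R) (t : nat) (p : pt) : Prop :=
  rx1 (Rs t) <= px p <= rx2 (Rs t) /\
  ry1 (Rs t) <= py p <= ry2 (Rs t) /\ z (t - 1)%nat <= pz p <= z t.

Definition Wall (Rs : nat -> rect) a s c := forall t, (1 <= t <= 4)%nat -> coord (idx a s) (Rs t) = c.

Lemma side_ok Rs z a s c r : Wall Rs a s c -> stack 4 Rs z r ->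
  (if s then vcoord a r <= c else c <= vcoord a r).
Proof. intros Hw [t [Ht [Hx [Hy Hz]]]]. specialize (Hw t Ht). destruct a, s; simpl in *; lra. Qed.

Definition good1 Rs (z : nat -> R) a c e t q :=
  vcoord a q = c /\ z (t - 1)%nat + e <= pz q <= z t - e /\
  tlo a (Rs t) + e <= tc a q <= thi a (Rs t) - e.

Definition good2 Rs (z : nat -> R) a c e t q :=
  vcoord a q = c /\ z (t - 1)%nat + e <= pz q <= z (S t) - e /\
  tlo a (Rs t) + e <= tc a q <= thi a (Rs t) - e /\
  tlo a (Rs (S t)) + e <= tc a q <= thi a (Rs (S t)) - e.

Lemma fi_good1 Rs z a s c e t q : Wall Rs a s c ->
  (forall t, (1 <= t <= 4)%nat -> e <= fm a s c (Rs t)) -> 0 < e -> (1 <= t <= 4)%nat ->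
  good1 Rs z a c e t q -> face_interior (stack 4 Rs z) a c s q.
Proof.
  intros Hw Hf He Ht (G1 & G2 & G3). split; [exact G1|]. exists e; split; [exact He|].
  intros r Hd. apply dist_bounds in Hd as (H1 & H2 & H3).
  apply Rabs_def2 in H1; apply Rabs_def2 in H2; apply Rabs_def2 in H3.
  split; [apply side_ok; exact Hw|].
  intros Hs. exists t. split; [exact Ht|].
  specialize (Hw t Ht); specialize (Hf t Ht). unfold fm in Hf.
  destruct a, s; simpl in *; lra.
Qed.

Lemma fi_good2 Rs z a s c e t q : Wall Rs a s c ->
  (forall t, (1 <= t <= 4)%nat -> e <= fm a s c (Rs t)) -> 0 < e -> (1 <= t <= 3)%nat ->
  good2 Rs z a c e t q -> face_interior (stack 4 Rs z) a c s q.
Proof.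
  intros Hw Hf He Ht (G1 & G2 & G3 & G4). split; [exact G1|]. exists e; split; [exact He|].
  intros r Hd. apply dist_bounds in Hd as (H1 & H2 & H3).
  apply Rabs_def2 in H1; apply Rabs_def2 in H2; apply Rabs_def2 in H3.
  split; [apply side_ok; exact Hw|].
  intros Hs. destruct (Rle_lt_dec (pz r) (z t)).
  - exists t. split; [lia|].
    pose proof (Hw t ltac:(lia)) as W; pose proof (Hf t ltac:(lia)) as F. unfold fm in F.
    destruct a, s; simpl in *; lra.
  - exists (S t). split; [lia|]. replace (S t - 1)%nat with t by lia.
    pose proof (Hw (S t) ltac:(lia)) as W; pose proof (Hf (S t) ltac:(lia)) as F. unfold fm in F.
    destruct a, s; simpl in *; lra.
Qed.

Lemma good1_seg Rs z a c e t p q l : good1 Rs z a c e t p -> good1 Rs z a c e t q -> 0 <= l <= 1 ->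
  good1 Rs z a c e t (segpt p q l).
Proof.
  unfold good1, segpt; intros (A1 & A2 & A3) (B1 & B2 & B3) Hl.
  destruct a; simpl in *.
  - split; [|split; apply conv; auto]. rewrite A1, B1; ring.
  - split; [|split; apply conv; auto]. rewrite A1, B1; ring.
Qed.

Lemma good2_seg Rs z a c e t p q l : good2 Rs z a c e t p -> good2 Rs z a c e t q -> 0 <= l <= 1 ->
  good2 Rs z a c e t (segpt p q l).
Proof.
  unfold good2, segpt; intros (A1 & A2 & A3 & A4) (B1 & B2 & B3 & B4) Hl.
  destruct a; simpl in *.
  - split; [|split; [|split]; apply conv; auto]. rewrite A1, B1; ring.
  - split; [|split; [|split]; apply conv; auto]. rewrite A1, B1; ring.
Qed.

Lemma visible_brick Rs z t p q : (1 <= t <= 4)%nat -> in_brick Rs z t p -> in_brick Rs z t q ->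
  visible (stack 4 Rs z) p q.
Proof.
  intros Ht (A1 & A2 & A3) (B1 & B2 & B3) l Hl. exists t. split; [exact Ht|]. simpl.
  split; [apply conv; auto|]. split; apply conv; auto.
Qed.

Definition ilo a (Rs : nat -> rect) t := Rmax (tlo a (Rs t)) (tlo a (Rs (S t))).
Definition ihi a (Rs : nat -> rect) t := Rmin (thi a (Rs t)) (thi a (Rs (S t))).
Definition mpt Rs (z : nat -> R) a c t :=
  mk a c ((tlo a (Rs t) + thi a (Rs t)) / 2) ((z (t - 1)%nat + z t) / 2).

Lemma mk_v a c u w : vcoord a (mk a c u w) = c. Proof. destruct a; reflexivity. Qed.
Lemma mk_t a c u w : tc a (mk a c u w) = u. Proof. destruct a; reflexivity. Qed.
Lemma mk_z a c u w : pz (mk a c u w) = w. Proof. destruct a; reflexivity. Qed.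

Lemma link Rs z a s c e t : Wall Rs a s c ->
  (forall t, (1 <= t <= 4)%nat -> e <= fm a s c (Rs t)) -> 0 < e ->
  (forall t, (1 <= t <= 4)%nat -> e <= (z t - z (t - 1)%nat) / 2) ->
  (forall t, (1 <= t <= 4)%nat -> e <= (thi a (Rs t) - tlo a (Rs t)) / 2) ->
  (forall t, (1 <= t <= 3)%nat -> e <= (ihi a Rs t - ilo a Rs t) / 2) ->
  (1 <= t <= 3)%nat ->
  path_in (face_interior (stack 4 Rs z) a c s) (mpt Rs z a c t) (mpt Rs z a c (S t)).
Proof.
  intros Hw Hf He Hz Hu Hi Ht.
  pose proof (Hz t ltac:(lia)) as Z1. pose proof (Hz (S t) ltac:(lia)) as Z2.
  replace (S t - 1)%nat with t in Z2 by lia.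
  pose proof (Hu t ltac:(lia)) as U1. pose proof (Hu (S t) ltac:(lia)) as U2.
  pose proof (Hi t Ht) as I. unfold ilo, ihi in I.
  pose proof (Rmax_l (tlo a (Rs t)) (tlo a (Rs (S t)))).
  pose proof (Rmax_r (tlo a (Rs t)) (tlo a (Rs (S t)))).
  pose proof (Rmin_l (thi a (Rs t)) (thi a (Rs (S t)))).
  pose proof (Rmin_r (thi a (Rs t)) (thi a (Rs (S t)))).
  set (us := (ilo a Rs t + ihi a Rs t) / 2).
  assert (Us : ilo a Rs t + e <= us <= ihi a Rs t - e) by (unfold us, ilo, ihi; lra).
  unfold ilo, ihi in Us.
  set (k := mk a c us ((z (t - 1)%nat + z t) / 2)).
  set (l := mk a c us ((z t + z (S t)) / 2)).
  assert (S1 : forall p q, good1 Rs z a c e t p -> good1 Rs z a c e t q ->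
     path_in (face_interior (stack 4 Rs z) a c s) p q).
  { intros p q Gp Gq. apply seg_path. intros l0 Hl.
    apply (fi_good1 Rs z a s c e t); auto; [lia|]. apply good1_seg; auto. }
  assert (S1' : forall p q, good1 Rs z a c e (S t) p -> good1 Rs z a c e (S t) q ->
     path_in (face_interior (stack 4 Rs z) a c s) p q).
  { intros p q Gp Gq. apply seg_path. intros l0 Hl.
    apply (fi_good1 Rs z a s c e (S t)); auto; [lia|]. apply good1_seg; auto. }
  assert (S2 : forall p q, good2 Rs z a c e t p -> good2 Rs z a c e t q ->
     path_in (face_interior (stack 4 Rs z) a c s) p q).
  { intros p q Gp Gq. apply seg_path. intros l0 Hl.
    apply (fi_good2 Rs z a s c e t); auto. apply good2_seg; auto. }
  apply path_trans with k; [|apply path_trans with l].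
  - apply S1; unfold good1, mpt, k; rewrite ?mk_v, ?mk_t, ?mk_z; lra.
  - apply S2; unfold good2, k, l; rewrite ?mk_v, ?mk_t, ?mk_z; lra.
  - apply S1'; unfold good1, mpt, l; rewrite ?mk_v, ?mk_t, ?mk_z;
      replace (S t - 1)%nat with t by lia; lra.
Qed.

Lemma emin (f : nat -> R) n : (forall t, (1 <= t <= n)%nat -> 0 < f t) ->
  exists e, 0 < e /\ forall t, (1 <= t <= n)%nat -> e <= f t.
Proof.
  induction n as [|n IH]; intros H.
  - exists 1. split; [lra|]. intros; lia.
  - destruct IH as (e & He & Hle). { intros; apply H; lia. }
    exists (Rmin e (f (S n))). split.
    + apply Rmin_glb_lt; auto. apply H; lia.
    + intros t Ht. destruct (Nat.eq_dec t (S n)) as [->|].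
      * apply Rmin_r.
      * eapply Rle_trans; [apply Rmin_l|]. apply Hle; lia.
Qed.

Lemma dist_self p : dist_inf p p = 0.
Proof. unfold dist_inf. replace (px p - px p) with 0 by ring.
  replace (py p - py p) with 0 by ring. replace (pz p - pz p) with 0 by ring.
  rewrite Rabs_R0. unfold Rmax. destruct Rle_dec; destruct Rle_dec; reflexivity. Qed.

Theorem mainTheorem11 (Rs : nat -> rect) (z : nat -> R) :
  stack_ok 4 Rs z ->
  (forall t : nat, (1 <= t <= 3)%nat -> contact_type1 (Rs t) (Rs (S t))) ->
  exists F : pt -> Prop, vertical_face (stack 4 Rs z) F /\ guards (stack 4 Rs z) F.
Proof.
  intros [Hok Hz0] Hc.
  destruct (contact_one _ _ (Hc 1%nat ltac:(lia))) as (k1 & _ & K1).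
  destruct (contact_one _ _ (Hc 2%nat ltac:(lia))) as (k2 & _ & K2).
  destruct (contact_one _ _ (Hc 3%nat ltac:(lia))) as (k3 & _ & K3).
  destruct (pick3 k1 k2 k3) as (j & Hj & J1 & J2 & J3).
  assert (Ha : exists a s, idx a s = j).
  { destruct j as [|[|[|[|j]]]]; [exists AxX, false|exists AxX, true|exists AxY, false|exists AxY, true|lia];
    reflexivity. }
  destruct Ha as (a & s & Hidx).
  set (c := coord j (Rs 1%nat)).
  assert (Hw : Wall Rs a s c).
  { intros t Ht. rewrite Hidx. unfold c.
    pose proof (K1 j Hj J1). pose proof (K2 j Hj J2). pose proof (K3 j Hj J3).
    destruct t as [|[|[|[|[|t]]]]]; try lia; simpl in *; congruence. }
  assert (Pf : forall t, (1 <= t <= 4)%nat -> 0 < fm a s c (Rs t)).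
  { intros t Ht. pose proof (Hw t Ht). pose proof (Hok t Ht). unfold rect_ok, fm in *.
    destruct a, s; simpl in *; lra. }
  assert (Ph : forall t, (1 <= t <= 4)%nat -> 0 < (z t - z (t - 1)%nat) / 2).
  { intros t Ht. destruct t as [|t]; [lia|]. replace (S t - 1)%nat with t by lia.
    pose proof (Hz0 t ltac:(lia)). lra. }
  assert (Pu : forall t, (1 <= t <= 4)%nat -> 0 < (thi a (Rs t) - tlo a (Rs t)) / 2).
  { intros t Ht. pose proof (Hok t Ht). unfold rect_ok in *. destruct a; simpl; lra. }
  assert (Pi : forall t, (1 <= t <= 3)%nat -> 0 < (ihi a Rs t - ilo a Rs t) / 2).
  { intros t Ht. pose proof (Hok t ltac:(lia)). pose proof (Hok (S t) ltac:(lia)).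
    pose proof (Hc t Ht) as C. unfold contact_type1, canon_type1, rect_sub, rect_ok in *.
    unfold ilo, ihi, Rmax, Rmin.
    destruct C as [[C _]|[C _]]; destruct Rle_dec; destruct Rle_dec; destruct a; simpl; lra. }
  destruct (emin _ 4 Pf) as (e1 & E1 & F1).
  destruct (emin _ 4 Ph) as (e2 & E2 & F2).
  destruct (emin _ 4 Pu) as (e3 & E3 & F3).
  destruct (emin _ 3 Pi) as (e4 & E4 & F4).
  set (e := Rmin (Rmin e1 e2) (Rmin e3 e4)).
  assert (Ee1 : e <= e1) by (unfold e; eapply Rle_trans; apply Rmin_l).
  assert (Ee2 : e <= e2) by (unfold e; eapply Rle_trans; [apply Rmin_l|apply Rmin_r]).
  assert (Ee3 : e <= e3) by (unfold e; eapply Rle_trans; [apply Rmin_r|apply Rmin_l]).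
  assert (Ee4 : e <= e4) by (unfold e; eapply Rle_trans; apply Rmin_r).
  assert (He : 0 < e) by (unfold e; repeat apply Rmin_glb_lt; auto).
  assert (Hf : forall t, (1 <= t <= 4)%nat -> e <= fm a s c (Rs t))
    by (intros t Ht; specialize (F1 t Ht); lra).
  assert (Hz : forall t, (1 <= t <= 4)%nat -> e <= (z t - z (t - 1)%nat) / 2)
    by (intros t Ht; specialize (F2 t Ht); lra).
  assert (Hu : forall t, (1 <= t <= 4)%nat -> e <= (thi a (Rs t) - tlo a (Rs t)) / 2)
    by (intros t Ht; specialize (F3 t Ht); lra).
  assert (Hi : forall t, (1 <= t <= 3)%nat -> e <= (ihi a Rs t - ilo a Rs t) / 2)
    by (intros t Ht; specialize (F4 t Ht); lra).
  set (FI := face_interior (stack 4 Rs z) a c s).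
  assert (Hm : forall t, (1 <= t <= 4)%nat -> FI (mpt Rs z a c t)).
  { intros t Ht. apply (fi_good1 Rs z a s c e t); auto.
    specialize (Hz t Ht); specialize (Hu t Ht).
    unfold good1, mpt; rewrite ?mk_v, ?mk_t, ?mk_z; lra. }
  assert (Hp : forall t, (1 <= t <= 4)%nat -> path_in FI (mpt Rs z a c 1) (mpt Rs z a c t)).
  { intros t Ht.
    pose proof (link Rs z a s c e 1 Hw Hf He Hz Hu Hi ltac:(lia)) as L1.
    pose proof (link Rs z a s c e 2 Hw Hf He Hz Hu Hi ltac:(lia)) as L2.
    pose proof (link Rs z a s c e 3 Hw Hf He Hz Hu Hi ltac:(lia)) as L3.
    destruct t as [|[|[|[|[|t]]]]]; try lia.
    - apply path_refl. apply Hm; lia.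
    - exact L1.
    - exact (path_trans _ _ _ _ L1 L2).
    - exact (path_trans _ _ _ _ (path_trans _ _ _ _ L1 L2) L3). }
  exists (closure (fun q => FI q /\ path_in FI (mpt Rs z a c 1) q)).
  split.
  - exists a, c, s, (mpt Rs z a c 1). split; [apply Hm; lia|]. intros x; tauto.
  - intros p [t [Ht Hb]]. exists (mpt Rs z a c t). split.
    + intros eps Heps. exists (mpt Rs z a c t). split; [split; auto|].
      rewrite dist_self; exact Heps.
    + apply (visible_brick Rs z t); auto.
      specialize (Hz t Ht); specialize (Hu t Ht); pose proof (Hw t Ht); pose proof (Hok t Ht).
      unfold in_brick, mpt, mk, rect_ok in *. destruct a, s; simpl in *; lra.
Qed.
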